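(* Let $p\geq 2$ be an integer, $r=\lceil\log_2(p-1)\rceil$ and $N_r=\binom{\lceil r/2\rceil+1}{2}+\binom{\lfloor r/2\rfloor+1}{2}$. For every integer $0\leq q\leq p-1$ and every integer $m\geq 2N_r+2$, $$\mathrm{forb}(m,3,F(p-q,p,p,p-q))\geq \mathrm{forb}(m,3,p\cdot K_2)-qN_r.$$
   Context: An $s$-matrix has entries in $\{0,\dots,s-1\}$; simple means no repeated columns. $F\prec A$ means some submatrix of $A$ is a row/column permutation of $F$. $\mathrm{forb}(m,s,F)$ is the maximum number of columns of an $m$-rowed simple $s$-matrix $A$ with $F\not\prec A$. $F(a,b,c,d)$ is the 2-rowed $(0,1)$-matrix with $a$ columns $\binom00$, $b$ columns $\binom10$, $c$ columns $\binom01$, $d$ columns $\binom11$. $K_2$ is the $2\times4$ matrix of all $(0,1)$-columns of length 2 and $p\cdot K_2$ the concatenation of $p$ copies of it. *)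

(* Defs.v *)
From mathcomp Require Import all_boot all_algebra.
Set Implicit Arguments. Unset Strict Implicit. Unset Printing Implicit Defensive.

(* An m-rowed simple s-matrix is represented as its SET of columns; each column
   is a function 'I_m -> 'I_s (entries in {0,...,s-1}).  Simplicity (no repeated
   columns) is automatic, and the number of columns is #|A|. *)
Definition smat (m s : nat) := {set {ffun 'I_m -> 'I_s}}.

(* F \prec A : some submatrix of A (k distinct rows, l distinct columns) is a
   row/column permutation of F; the permutations are absorbed into the
   injective choices of rows (rho) and columns (gamma). *)
Definition config_in (k l m s : nat) (F : 'M[nat]_(k, l)) (A : smat m s) : bool :=
  [exists rho : {ffun 'I_k -> 'I_m}, exists gamma : {ffun 'I_l -> {ffun 'I_m -> 'I_s}},
    [&& injectiveb rho, injectiveb gamma, [forall j, gamma j \in A] &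
        [forall i, forall j, nat_of_ord (gamma j (rho i)) == F i j]]].

Definition forb (m s k l : nat) (F : 'M[nat]_(k, l)) : nat :=
  \max_(A : smat m s | ~~ config_in F A) #|A|.

(* F(a,b,c,d): a columns (0,0)^T, b columns (1,0)^T, c columns (0,1)^T, d columns (1,1)^T. *)
Definition Fabcd (a b c d : nat) : 'M[nat]_(2, a + b + c + d) :=
  \matrix_(i < 2, j < a + b + c + d)
    if i == 0 :> nat then ((a <= j < a + b) || (a + b + c <= j) : nat)
    else ((a + b <= j) : nat).

(* p . K_2 : p copies of the 2x4 matrix of all (0,1)-columns of length 2;
   column j has type t = j mod 4, with entries (t mod 2, t div 2). *)
Definition pK2 (p : nat) : 'M[nat]_(2, 4 * p) :=
  \matrix_(i < 2, j < 4 * p) if i == 0 :> nat then (j %% 4) %% 2 else (j %% 4) %/ 2.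

Definition ceil_log2 (n : nat) : nat := up_log 2 n.

Definition Nr (r : nat) : nat := 'C(uphalf r + 1, 2) + 'C(r./2 + 1, 2).

(* Main.v *)
Require Import Defs.
From mathcomp Require Import all_boot all_algebra zify.
Set Implicit Arguments. Unset Strict Implicit. Unset Printing Implicit Defensive.


Lemma card_ord_pred m (P : pred nat) :
  #|[set t : 'I_m | P t]| = count P (iota 0 m).
Proof.
rewrite cardsE cardE /enum_mem size_filter -val_enum_ord count_map.
by rewrite enumT; apply: eq_count => t.
Qed.

Lemma count_iota_all (P : pred nat) a n :
  (forall t, a <= t < a + n -> P t) -> count P (iota a n) = n.
Proof.
move=> H; rewrite -[RHS](size_iota a n) -count_predT.
apply: eq_in_count => t; rewrite mem_iota => /H ->. by [].
Qed.

Lemma count_iota_none (P : pred nat) a n :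
  (forall t, a <= t < a + n -> ~~ P t) -> count P (iota a n) = 0.
Proof.
move=> H; rewrite -(count_pred0 (iota a n)).
apply: eq_in_count => t; rewrite mem_iota => /H /negbTE ->. by [].
Qed.

Lemma card_prefix m k : k <= m -> #|[set t : 'I_m | t < k]| = k.
Proof.
move=> km; rewrite (card_ord_pred m (fun t => t < k)) -(subnKC km) iotaD count_cat.
rewrite count_iota_all; last by move=> t; lia.
rewrite count_iota_none; last by move=> t; lia.
by rewrite addn0.
Qed.

Lemma card_ends m a c : a <= c -> c <= m ->
  #|[set t : 'I_m | (t < a) || (c <= t)]| = a + (m - c).
Proof.
move=> ac cm; rewrite (card_ord_pred m (fun t => (t < a) || (c <= t))).
have -> : m = a + ((c - a) + (m - c)) by lia.
rewrite iotaD iotaD !count_cat.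
rewrite count_iota_all; last by move=> t; lia.
rewrite count_iota_none; last by move=> t; lia.
rewrite count_iota_all; last by move=> t; lia.
lia.
Qed.

Lemma card_bigcup_seq_le (I T : finType) (r : seq I) (P : pred I) (F : I -> {set T}) :
  #|\bigcup_(i <- r | P i) F i| <= \sum_(i <- r | P i) #|F i|.
Proof.
elim: r => [|i r IH]; first by rewrite !big_nil cards0.
rewrite !big_cons; case: (P i) => //.
by apply: leq_trans (leq_card_setU _ _) _; rewrite leq_add2l.
Qed.

Lemma card_bigcup_le (I T : finType) (P : pred I) (F : I -> {set T}) :
  #|\bigcup_(i | P i) F i| <= \sum_(i | P i) #|F i|.
Proof. exact: card_bigcup_seq_le. Qed.

Lemma mem_bigcup_seq (I T : finType) (r : seq I) (P : pred I) (F : I -> {set T}) x :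
  x \in \bigcup_(i <- r | P i) F i -> exists j, [/\ j \in r, P j & x \in F j].
Proof.
elim: r => [|i r IH]; first by rewrite big_nil inE.
rewrite big_cons; case Pi: (P i); last first.
  by move/IH => [j [jr Pj xj]]; exists j; rewrite inE jr orbT.
rewrite inE => /orP [xi|]; first by exists i; rewrite inE eqxx.
by move/IH => [j [jr Pj xj]]; exists j; rewrite inE jr orbT.
Qed.

Lemma card_bigcup_seq_eq (I T : finType) (r : seq I) (P : pred I) (F : I -> {set T}) :
  uniq r ->
  (forall i j, P i -> P j -> i != j -> [disjoint F i & F j]) ->
  #|\bigcup_(i <- r | P i) F i| = \sum_(i <- r | P i) #|F i|.
Proof.
move=> + D; elim: r => [|i r IH]; first by rewrite !big_nil cards0.
rewrite cons_uniq => /andP [ir ur].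
rewrite !big_cons; case Pi: (P i); last exact: IH.
rewrite cardsU (IH ur).
suff -> : F i :&: \bigcup_(j <- r | P j) F j = set0 by rewrite cards0 subn0.
apply/setP => x; rewrite !inE; apply/negP => /andP [xi].
move/mem_bigcup_seq => [j [jr Pj xj]].
have ij : i != j by apply: contraNneq ir => ->.
by move: (D i j Pi Pj ij); rewrite disjoint_sym => /disjointFr; move/(_ x xj); rewrite xi.
Qed.

Lemma card_bigcup_eq (I T : finType) (P : pred I) (F : I -> {set T}) :
  (forall i j, P i -> P j -> i != j -> [disjoint F i & F j]) ->
  #|\bigcup_(i | P i) F i| = \sum_(i | P i) #|F i|.
Proof. by apply: card_bigcup_seq_eq; exact: index_enum_uniq. Qed.

Lemma exists_subset (T : finType) (S : {set T}) k :
  k <= #|S| -> exists E : {set T}, E \subset S /\ #|E| = k.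
Proof.
elim: k => [|k IH] kS; first by exists set0; rewrite sub0set cards0.
have [E [ES cE]] := IH (ltnW kS).
have : 0 < #|S :\: E|.
  by rewrite cardsD (setIidPr ES) subn_gt0 cE.
case/card_gt0P => x; rewrite inE => /andP [xE xS].
exists (x |: E); rewrite subUset sub1set xS ES cardsU1 xE cE; split=> //.
Qed.


Definition cl m := {ffun 'I_m -> 'I_3}.
Definition o0 : 'I_3 := @Ordinal 3 0 isT.
Definition o1 : 'I_3 := @Ordinal 3 1 isT.
Definition o2 : 'I_3 := @Ordinal 3 2 isT.
Definition upd m (x : cl m) (a : 'I_m) (w : 'I_3) : cl m :=
  [ffun t => if t == a then w else x t].

Definition pairc m (G : {set cl m}) :=
  forall i j : 'I_m, i < j -> exists u, exists v,
    [/\ u < 2, v < 2 & forall x, x \in G -> ~ ((x i : nat) = u /\ (x j : nat) = v)].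

Lemma pairc_sub m (G H : {set cl m}) : G \subset H -> pairc H -> pairc G.
Proof.
move=> GH P i j ij; have [u [v [u2 v2 Hx]]] := P i j ij.
exists u, v; split=> // x xG; apply: Hx; exact: (subsetP GH).
Qed.

Lemma ord3_cases (w : 'I_3) : [\/ (w : nat) = 0, (w : nat) = 1 | w = o2].
Proof.
case: w => [[|[|[|n]]] H] //=; [by constructor 1|by constructor 2|].
by constructor 3; apply: val_inj.
Qed.

Lemma K2free m k (G : {set cl m}) : k <= m ->
  (forall x, x \in G -> forall t : 'I_m, k <= t -> x t = o2) ->
  pairc G -> 2 * #|G| <= (k + 2) * 2 ^ k.
Proof.
elim: k G => [|k IH] G km supp PG.
  have : G \subset [set [ffun=> o2]].
    apply/subsetP => x xG; rewrite inE; apply/eqP/ffunP => t.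
    by rewrite ffunE; apply: supp.
  move/subset_leq_card; rewrite cards1 => H; rewrite expn0 muln1; lia.
set a : 'I_m := Ordinal km.
set pi := fun x : cl m => upd x a o2.
set G2 := [set x in G | x a == o2].
set G0 := [set x in G | (x a : nat) == 0].
set G1 := [set x in G | (x a : nat) == 1].
have H1 : G \subset G2 :|: (G0 :|: G1).
  apply/subsetP => x xG; rewrite !inE xG /=.
  by case: (ord3_cases (x a)) => ->; rewrite ?eqxx ?orbT.
have H2 : #|G| <= #|G2| + (#|G0| + #|G1|).
  apply: leq_trans (subset_leq_card H1) _.
  apply: leq_trans (leq_card_setU _ _) _; rewrite leq_add2l.
  exact: leq_card_setU.
have injG (c : nat) : {in [set x in G | (x a : nat) == c] &, injective pi}.
  move=> x y; rewrite !inE => /andP [_ /eqP xa] /andP [_ /eqP ya] /ffunP E.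
  apply/ffunP => t; move: (E t); rewrite !ffunE.
  by case: eqP => [-> _|//]; apply: val_inj; rewrite /= xa ya.
have H3 : #|G0| = #|pi @: G0| by rewrite card_in_imset //; exact: injG.
have H3' : #|G1| = #|pi @: G1| by rewrite card_in_imset //; exact: injG.
have H4 := cardsUI (pi @: G0) (pi @: G1).
have H5 : 2 * #|G2| <= (k + 2) * 2 ^ k.
  apply: IH; first exact: ltnW.
    move=> x; rewrite inE => /andP [xG /eqP xa] t kt.
    case: (eqVneq t a) => [->//|ta]; apply: supp => //.
    by rewrite ltn_neqAle kt andbT; apply: contra_neq ta => kt'; apply: val_inj.
  by apply: pairc_sub PG; apply/subsetP => x; rewrite inE => /andP [].
have memG x : x \in G0 :|: G1 -> x \in G by rewrite !inE => /orP [] /andP [].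
have piE x t : pi x t = if t == a then o2 else x t by rewrite /pi /upd ffunE.
have H6 : 2 * #|pi @: G0 :|: pi @: G1| <= (k + 2) * 2 ^ k.
  apply: IH; first exact: ltnW.
    move=> z; rewrite -imsetU => /imsetP [x xG ->] t kt; rewrite piE.
    case: (eqVneq t a) => [//|ta]; apply: supp; first exact: memG.
    by rewrite ltn_neqAle kt andbT; apply: contra_neq ta => kt'; apply: val_inj.
  move=> i j ij; have [u [v [u2 v2 Hx]]] := PG i j ij.
  exists u, v; split=> // z; rewrite -imsetU => /imsetP [x xG ->]; rewrite !piE.
  case: (eqVneq i a) => [_ [] /= |ia]; first lia.
  case: (eqVneq j a) => [_ [] _ /= |ja]; first lia.
  by apply: Hx; exact: memG.
have H7 : #|pi @: G0 :&: pi @: G1| <= 2 ^ k.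
  set I := pi @: G0 :&: pi @: G1.
  have ext z c : z \in I -> c < 2 -> exists2 x, x \in G &
      (x a : nat) = c /\ forall t, t != a -> x t = z t.
    rewrite inE => /andP [/imsetP [x0 x0G ->] /imsetP [x1 x1G E]] c2.
    move: x0G x1G; rewrite !inE => /andP [x0G /eqP x0a] /andP [x1G /eqP x1a].
    case: c c2 => [|[|//]] _.
      by exists x0 => //; split=> // t ta; rewrite /pi /upd ffunE (negbTE ta).
    by exists x1 => //; split=> // t ta; rewrite E /pi /upd ffunE (negbTE ta).
  have za z : z \in I -> z a = o2.
    by rewrite inE => /andP [/imsetP [x0 _ ->] _]; rewrite /pi /upd ffunE eqxx.
  have zlt z t : z \in I -> z t != o2 -> t < k.
    move=> zI zt; have [x xG [_ xt]] := ext z 0 zI isT.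
    case: (eqVneq t a) => [eta|ta]; first by move: zt; rewrite eta za ?eqxx.
    rewrite ltnNge; apply/negP => kt.
    have kt1 : k < t.
      by rewrite ltn_neqAle kt andbT; apply: contra_neq ta => kt'; apply: val_inj.
    by move: zt; rewrite -xt // supp // eqxx.
  set sigma := fun z : cl m => [set t | z t != o2].
  have inj : {in I &, injective sigma}.
    move=> z z' zI z'I /setP E; apply/ffunP => t.
    case: (eqVneq t a) => [->|ta]; first by rewrite !za.
    move: (E t); rewrite !inE => Et.
    case: (eqVneq (z t) o2) => zt2.
      by rewrite zt2; move: Et; rewrite zt2 eqxx /= => /esym /negbFE /eqP.
    have z't2 : z' t != o2 by rewrite -Et.
    apply/eqP; apply/negP => /negP neq.
    have tk : t < a by exact: (zlt z t zI zt2).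
    have [u [v [u2 v2 Hx]]] := PG t a tk.
    have vz : (z t : nat) < 2.
      by move: zt2; case: (ord3_cases (z t)) => ->; rewrite ?eqxx.
    have vz' : (z' t : nat) < 2.
      by move: z't2; case: (ord3_cases (z' t)) => ->; rewrite ?eqxx.
    have nv : (z t : nat) != z' t by apply: contra neq => /eqP H; apply/eqP/val_inj.
    have [w wI wt] : exists2 w, w \in I & (w t : nat) = u.
      case: (eqVneq (z t : nat) u) => [<-|]; first by exists z.
      by exists z' => //; lia.
    have [x xG [xa xt]] := ext w v wI v2.
    by apply: (Hx x xG); rewrite xt.
  rewrite -(card_in_imset inj).
  have sub : sigma @: I \subset powerset [set t : 'I_m | t < k].
    apply/subsetP => S /imsetP [z zI ->]; rewrite powersetE.
    by apply/subsetP => t; rewrite !inE => /(zlt z t zI).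
  by apply: leq_trans (subset_leq_card sub) _; rewrite card_powerset card_prefix // ltnW.
rewrite expnS; nia.
Qed.


Definition des1 al c (k l : nat) : nat := if l < al then 0 else if c <= k then 1 else 0.
Definition des2 al (l : nat) : nat := if l < al then 0 else 1.

Ltac crush := rewrite /des1 /des2; repeat (case: ifP => ?); lia.

Lemma natc al c a k l (iTk iTl : bool) :
  al <= c -> k < l -> ~~ iTk || (k < a) -> ~~ iTl || (l < a) ->
  ~~ (((if k == a then (if a < al then 0 else 1) else if iTk then (if k < c then 1 else 0) else 2) == des1 al c k l)
   && ((if l == a then (if a < al then 0 else 1) else if iTl then (if l < c then 1 else 0) else 2) == des2 al l)).
Proof.
move=> alc kl Hk Hl.
move: Hk Hl; case: iTk; case: iTl => /= Hk Hl; crush.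
Qed.

Definition occ m al c (x : cl m) (k l : 'I_m) : bool :=
  [&& k < l, (x k : nat) == des1 al c k l & (x l : nat) == des2 al l].
Definition Main m al c : {set cl m} := [set x | [forall k, forall l, ~~ occ al c x k l]].
Definition Mk m al c k : {set cl m} :=
  [set x in Main m al c | [forall t : 'I_m, (k <= t) ==> (x t == o2)]].

Lemma card_disjU (T : finType) (A B : {set T}) :
  [disjoint A & B] -> #|A :|: B| = #|A| + #|B|.
Proof. by move=> D; apply/eqP; rewrite (leq_card_setU A B). Qed.

Lemma mydisj (T : finType) (A B : {set T}) :
  (forall x, x \in A -> x \in B -> False) -> [disjoint A & B].
Proof.
move=> H; rewrite disjoints_subset; apply/subsetP => x xA; rewrite inE.
by apply/negP => xB; exact: H x xA xB.
Qed.

Lemma val_if (b : bool) (u v : 'I_3) : ((if b then u else v) : nat) = if b then u else v.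
Proof. by case: b. Qed.

Lemma updE m (x : cl m) a w t : upd x a w t = if t == a then w else x t.
Proof. by rewrite ffunE. Qed.

Lemma MkE m al c k x : (x \in Mk m al c k) =
  (x \in Main m al c) && [forall t : 'I_m, (k <= t) ==> (x t == o2)].
Proof. by rewrite inE. Qed.

Lemma MainE m al c x : (x \in Main m al c) = [forall k, forall l, ~~ occ al c x k l].
Proof. by rewrite inE. Qed.

Lemma Main_lb m al c k : al <= c -> k <= m -> (k + 2) * 2 ^ k <= 2 * #|Mk m al c k|.
Proof.
move=> alc; elim: k => [|k IH] km.
  have : [ffun=> o2] \in Mk m al c 0.
    rewrite !inE; apply/andP; split; last by apply/forallP => t; rewrite ffunE.
    apply/forallP => k; apply/forallP => l; rewrite /occ !ffunE /des1 /des2.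
    by apply/negP => /and3P [_ _]; case: ifP.
  move=> H; have : 0 < #|Mk m al c 0| by apply/card_gt0P; exists [ffun=> o2].
  rewrite expn0; lia.
set a : 'I_m := Ordinal km.
set wa : 'I_3 := if k < al then o1 else o0.
set wa' : 'I_3 := if k < al then o0 else o1.
set s := fun t : 'I_m => if t < c then o1 else o0.
set y := fun T : {set 'I_m} => [ffun t => if t \in T then s t else o2] : cl m.
set P2 := [set upd x a wa | x in (Mk m al c k)].
set P3 := [set upd (y T) a wa' | T in powerset [set t : 'I_m | t < k]].
have Mka x : x \in (Mk m al c k) -> x a = o2.
  by rewrite MkE => /andP [_ /forallP /(_ a)]; rewrite leqnn => /eqP.
have c2 : #|P2| = #|(Mk m al c k)|.
  rewrite card_in_imset // => x x' xP x'P /ffunP E; apply/ffunP => t.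
  move: (E t); rewrite !updE; case: eqP => [->|//]; by rewrite !Mka.
have c3 : #|P3| = 2 ^ k.
  rewrite card_in_imset; first by rewrite card_powerset card_prefix // ltnW.
  move=> T T'; rewrite !powersetE => TS T'S /ffunP E; apply/setP => t.
  move: (E t); rewrite !updE !ffunE.
  have tk : t \in T -> t != a.
    by move=> /(subsetP TS); rewrite inE => tk0; apply/negP => /eqP ta; move: tk0; rewrite ta ltnn.
  have tk' : t \in T' -> t != a.
    by move=> /(subsetP T'S); rewrite inE => tk0; apply/negP => /eqP ta; move: tk0; rewrite ta ltnn.
  case: (eqVneq t a) => [ta|ta] Et.
    by apply/idP/idP => [/tk|/tk']; rewrite ta eqxx.
  by move: Et; case: (t \in T); case: (t \in T') => //; rewrite /s; case: ifP.
have aE (t : 'I_m) : (t == a) = ((t : nat) == k) by [].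
have sub : (Mk m al c k) :|: P2 :|: P3 \subset Mk m al c k.+1.
  apply/subsetP => z; rewrite !in_setU -!orbA => /or3P [zP|/imsetP [x xP ->]|/imsetP [T TS ->]].
  - move: zP; rewrite !MkE; case/andP => -> /forallP H /=; apply/forallP => t.
    by apply/implyP => kt; move/implyP: (H t); apply; apply: ltnW.
  - have xa := Mka x xP.
    rewrite MkE in xP; case/andP: xP => xM /forallP xs.
    rewrite MkE; apply/andP; split; last first.
      apply/forallP => t; apply/implyP => kt; rewrite updE aE.
      have -> : ((t : nat) == k) = false by apply/negbTE; rewrite neq_ltn kt orbT.
      by move/implyP: (xs t); apply; apply: ltnW.
    rewrite MainE; apply/forallP => k'; apply/forallP => l'.
    rewrite MainE in xM; move: xM => /forallP /(_ k') /forallP /(_ l').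
    rewrite /occ !updE !aE.
    case: (eqVneq (l' : nat) k) => [lk|lk].
      by rewrite /wa lk => _; apply/negP => /and3P [_ _]; rewrite /des2; case: ifP.
    case: (eqVneq (k' : nat) k) => [kk|kk] //.
    move=> _; apply/negP => /and3P [kl _].
    have kl' : k <= l' by rewrite -kk ltnW.
    have xl : x l' = o2 by apply/eqP; exact: (implyP (xs l') kl').
    by rewrite xl /des2; case: ifP.
  - have TS' : forall t, t \in T -> t < k.
      by move: TS; rewrite powersetE => TS t /(subsetP TS); rewrite inE.
    have zE t : (upd (y T) a wa' t : nat) = if (t : nat) == k then (if k < al then 0 else 1)
        else if t \in T then (if t < c then 1 else 0) else 2.
      rewrite updE aE ffunE /wa' /s; case: ifP => _; first by case: ifP.
      by case: ifP => _ //; case: ifP.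
    rewrite MkE; apply/andP; split.
      rewrite MainE; apply/forallP => k'; apply/forallP => l'.
      rewrite /occ !zE; apply/negP => /and3P [kl H1 H2].
      have S1 : ~~ (k' \in T) || (k' < k) by case: (k' \in T) (TS' k') => //= ->.
      have S2 : ~~ (l' \in T) || (l' < k) by case: (l' \in T) (TS' l') => //= ->.
      have N := natc (a := k) (iTk := k' \in T) (iTl := l' \in T) alc kl S1 S2.
      by rewrite H1 H2 in N.
    apply/forallP => t; apply/implyP => kt; rewrite -val_eqE /= zE.
    have -> : ((t : nat) == k) = false by apply/negbTE; rewrite neq_ltn kt orbT.
    by case: ifP => // /TS'; lia.
have d1 : [disjoint Mk m al c k & P2].
  apply: mydisj => z /Mka za /imsetP [x _ E]; move: za; rewrite E updE eqxx /wa.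
  by case: ifP.
have d2 : [disjoint Mk m al c k :|: P2 & P3].
  apply: mydisj => z; rewrite in_setU => /orP [/Mka za|/imsetP [x _ ->]] /imsetP [T _ E].
    by move: za; rewrite E updE eqxx /wa'; case: ifP.
  by move: E => /ffunP /(_ a); rewrite !updE eqxx /wa /wa'; case: ifP.
have := subset_leq_card sub; rewrite card_disjU // card_disjU // c2 c3.
have := IH (ltnW km); rewrite expnS; nia.
Qed.


Definition Xv al c (i j t : nat) (iT : bool) : nat :=
  if t == i then des1 al c i j else if t == j then des2 al j
  else if iT then (if t < al then 1 else 0) else 2.

Lemma natS_l al c i j k l (iTl : bool) :
  al <= c -> i < j -> k < l ->
  ~~ iTl || [&& ((l < al) || (c <= l)), l != i & l != j] ->
  Xv al c i j l iTl == des2 al l -> (l == i) || (l == j).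
Proof.
move=> alc ij kl Hl; rewrite /Xv.
case: (eqVneq l i) => [_|li] //.
case: (eqVneq l j) => [_|lj]; first by rewrite orbT.
by move: Hl; case: iTl => //= _; rewrite /des2; case: ifP.
Qed.

Lemma natS al c i j k l (iTk iTl : bool) :
  al <= c -> i < j -> k < l ->
  ~~ iTk || [&& ((k < al) || (c <= k)), k != i & k != j] ->
  ~~ iTl || [&& ((l < al) || (c <= l)), l != i & l != j] ->
  (Xv al c i j k iTk == des1 al c k l) && (Xv al c i j l iTl == des2 al l) ->
  (k == i) && (l == j).
Proof.
move=> alc ij kl Hk Hl /andP [E1 E2].
have := natS_l alc ij kl Hl E2 => /orP [/eqP li|/eqP lj].
  subst l; move: E1 E2 Hk; rewrite /Xv eqxx.
  have -> : (k == i) = false by apply/negbTE; rewrite neq_ltn kl.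
  have -> : (k == j) = false by apply/negbTE; rewrite neq_ltn (ltn_trans kl ij).
  case: iTk => /=; crush.
subst l; move: E1 E2 Hk; rewrite /Xv.
case: (eqVneq k i) => [_|ki]; first by rewrite eqxx.
have -> : (k == j) = false by apply/negbTE; rewrite neq_ltn kl.
have -> : (j == i) = false by apply/negbTE; rewrite neq_ltn ij orbT.
rewrite eqxx; case: iTk => /=; crush.
Qed.

Definition i3 (n : nat) : 'I_3 := inord n.
Definition sgl m al c (i j : 'I_m) (T : {set 'I_m}) : cl m :=
  [ffun t : 'I_m => i3 (Xv al c i j t (t \in T))].
Definition Sset m al c (i j : 'I_m) : {set cl m} :=
  [set x : cl m | occ al c x i j && [forall k, forall l, occ al c x k l ==> (k == i) && (l == j)]].
Definition Free m al c (i j : 'I_m) : {set 'I_m} :=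
  [set t : 'I_m | (t < al) || (c <= t)] :\: [set i; j].

Lemma Xv_le2 al c i j t b : Xv al c i j t b <= 2.
Proof. by rewrite /Xv /des1 /des2; repeat case: ifP. Qed.

Lemma sglE m al c (i j : 'I_m) T t : (sgl al c i j T t : nat) = Xv al c i j t (t \in T).
Proof. by rewrite ffunE /i3 inordK // ltnS Xv_le2. Qed.

Lemma singles m al c (i j : 'I_m) : al <= c -> i < j ->
  2 ^ #|Free al c i j| <= #|Sset al c i j|.
Proof.
move=> alc ij; rewrite -card_powerset.
have FE T t : T \in powerset (Free al c i j) -> t \in T ->
    [&& ((t < al) || (c <= t)), (t : nat) != i & (t : nat) != j].
  rewrite powersetE => /subsetP TF /TF; rewrite !inE negb_or.
  by case/andP => /andP [ti tj] h; apply/and3P; split.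
have inj : {in powerset (Free al c i j) &, injective (sgl al c i j)}.
  move=> T T' TF T'F /ffunP E; apply/setP => t; move: (E t) => /(congr1 val) /=.
  rewrite -/(nat_of_ord _) -/(nat_of_ord (sgl al c i j T' t)) !sglE /Xv.
  case: (boolP (t \in T)) => tT; case: (boolP (t \in T')) => tT' //.
    have /and3P [_ /negbTE -> /negbTE ->] := FE T t TF tT; by case: ifP.
  have /and3P [_ /negbTE -> /negbTE ->] := FE T' t T'F tT'; by case: ifP.
rewrite -(card_in_imset inj); apply: subset_leq_card.
apply/subsetP => x /imsetP [T TF ->]; rewrite inE; apply/andP; split.
  rewrite /occ !sglE ij /Xv eqxx /=.
  have -> : ((j : nat) == i) = false by apply/negbTE; rewrite neq_ltn ij orbT.
  by rewrite !eqxx.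
apply/forallP => k; apply/forallP => l; apply/implyP; rewrite /occ !sglE.
case/and3P => kl E1 E2; apply: (natS (iTk := k \in T) (iTl := l \in T) alc ij kl _ _ _).
- by case: (boolP (k \in T)) => [kT|//]; rewrite /=; exact: FE T k TF kT.
- by case: (boolP (l \in T)) => [lT|//]; rewrite /=; exact: FE T l TF lT.
- by rewrite E1 E2.
Qed.

Lemma card_Free m al c (i j : 'I_m) : al <= c -> c <= m ->
  al + (m - c) - 2 <= #|Free al c i j|.
Proof.
move=> alc cm; rewrite /Free cardsD (card_ends alc cm).
have : #|[set t : 'I_m | (t < al) || (c <= t)] :&: [set i; j]| <= 2.
  apply: leq_trans (subset_leq_card (subsetIr _ _)) _.
  by rewrite cards2; case: (i == j).
by move=> H; apply: leq_sub2l.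
Qed.


Lemma shift_lt lo k n t : lo + k <= n -> t < k -> lo + t < n.
Proof. lia. Qed.

Lemma block m s n lo k (F : 'M[nat]_(2, n)) (rho : {ffun 'I_2 -> 'I_m})
   (gamma : {ffun 'I_n -> {ffun 'I_m -> 'I_s}}) (A : {set {ffun 'I_m -> 'I_s}}) a0 a1 :
  lo + k <= n ->
  (forall t : 'I_n, lo <= t < lo + k -> F ord0 t = a0 /\ F ord_max t = a1) ->
  injective gamma -> (forall j, gamma j \in A) ->
  (forall i j, (gamma j (rho i) : nat) == F i j) ->
  k <= #|[set x in A | ((x (rho ord0) : nat) == a0) && ((x (rho ord_max) : nat) == a1)]|.
Proof.
move=> lkn HF ginj gA gF.
pose f := fun t : 'I_k => gamma (Ordinal (shift_lt lkn (ltn_ord t))).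
have finj : injective f.
  by move=> t t' /ginj /(congr1 val) /= /addnI /val_inj.
rewrite -[k in k <= _]card_ord -(card_imset _ finj); apply: subset_leq_card.
apply/subsetP => x /imsetP [t _ ->]; rewrite inE gA /=.
have [H0 H1] := HF (Ordinal (shift_lt lkn (ltn_ord t))) (ltac:(by rewrite /= leq_addr /= ltn_add2l)).
by rewrite /f (eqP (gF _ _)) (eqP (gF _ _)) H0 H1 !eqxx.
Qed.

Lemma FabcdE a b c d (t : 'I_(a + b + c + d)) :
  Fabcd a b c d ord0 t = ((a <= t < a + b) || (a + b + c <= t)) /\
  Fabcd a b c d ord_max t = (a + b <= t).
Proof. by rewrite /Fabcd !mxE. Qed.

Lemma F_count m s p q (A : {set {ffun 'I_m -> 'I_s}}) :
  config_in (Fabcd (p - q) p p (p - q)) A ->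
  exists rho : {ffun 'I_2 -> 'I_m}, rho ord0 != rho ord_max /\
  forall a0 a1, a0 < 2 -> a1 < 2 ->
  (if a0 == a1 then p - q else p) <=
    #|[set x in A | ((x (rho ord0) : nat) == a0) && ((x (rho ord_max) : nat) == a1)]|.
Proof.
case/existsP => rho /existsP [gamma /and4P [/injectiveP ri /injectiveP gi /forallP gA gF]].
have gF' : forall i j, (gamma j (rho i) : nat) == Fabcd (p - q) p p (p - q) i j.
  by move=> i j; move/forallP: gF => /(_ i) /forallP /(_ j).
exists rho; split; first by apply/negP => /eqP /ri.
move=> a0 a1 a02 a12.
set a := p - q.
case: a0 a02 => [|[|//]] _; case: a1 a12 => [|[|//]] _ /=.
- apply: (block (lo := 0) _ _ gi gA gF'); first lia.
  by move=> t tb; have [-> ->] := FabcdE t; split; apply/eqP; rewrite eqb0; lia.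
- apply: (block (lo := a + p) _ _ gi gA gF'); first lia.
  move=> t tb; have [-> ->] := FabcdE t; split; first (apply/eqP; rewrite eqb0; lia).
  by apply/eqP; rewrite eqb1; lia.
- apply: (block (lo := a) _ _ gi gA gF'); first lia.
  move=> t tb; have [-> ->] := FabcdE t; split; last (apply/eqP; rewrite eqb0; lia).
  by apply/eqP; rewrite eqb1; lia.
- apply: (block (lo := a + p + p) _ _ gi gA gF'); first lia.
  by move=> t tb; have [-> ->] := FabcdE t; split; apply/eqP; rewrite eqb1; lia.
Qed.

Lemma pK2_config m p (A : {set {ffun 'I_m -> 'I_3}}) (i j : 'I_m) :
  i != j ->
  (forall u v, u < 2 -> v < 2 ->
     p <= #|[set x in A | ((x i : nat) == u) && ((x j : nat) == v)]|) ->
  config_in (pK2 p) A.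
Proof.
move=> ij H.
pose S (tau : nat) := [set x in A | ((x i : nat) == tau %% 2) && ((x j : nat) == tau %/ 2)].
have Sp (t : 'I_(4 * p)) : t %/ 4 < size (enum (S (t %% 4))).
  rewrite -cardE; apply: (@leq_trans p); first by have := ltn_ord t; lia.
  by apply: H; [rewrite ltn_mod | have := ltn_mod t 4; lia].
pose x0 : {ffun 'I_m -> 'I_3} := [ffun=> ord0].
pose rho : {ffun 'I_2 -> 'I_m} := [ffun t => if t == ord0 then i else j].
pose gamma : {ffun 'I_(4 * p) -> {ffun 'I_m -> 'I_3}} :=
  [ffun t : 'I_(4 * p) => nth x0 (enum (S (t %% 4))) (t %/ 4)].
have gS t : gamma t \in S (t %% 4).
  by rewrite ffunE -mem_enum; apply: mem_nth; exact: Sp.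
apply/existsP; exists rho; apply/existsP; exists gamma.
apply/and4P; split.
- apply/injectiveP => t t'; rewrite !ffunE.
  case: (eqVneq t ord0) => [->|t0]; case: (eqVneq t' ord0) => [->|t'0] //.
  + by move/eqP; rewrite (negbTE ij).
  + by move/eqP; rewrite eq_sym (negbTE ij).
  + move=> _; apply: val_inj; move: t0 t'0; rewrite -!val_eqE /=.
    by case: t => [[|[|//]] ?]; case: t' => [[|[|//]] ?].
- apply/injectiveP => t t' E.
  have := gS t; have := gS t'; rewrite -E !inE => /andP [_ /andP [/eqP a1 /eqP a2]] /andP [_ /andP [/eqP b1 /eqP b2]].
  have m4 : t %% 4 = t' %% 4.
    have := ltn_mod t 4; have := ltn_mod t' 4; have := divn_eq (t %% 4) 2; have := divn_eq (t' %% 4) 2; lia.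
  have s1 : t %/ 4 < size (enum (S (t' %% 4))) by rewrite -m4; exact: Sp.
  have s2 := Sp t'.
  move: E; rewrite !ffunE m4 => /eqP; rewrite nth_uniq ?enum_uniq //.
  move=> /eqP d4; apply: val_inj; rewrite /= (divn_eq t 4) (divn_eq t' 4) d4 m4 //.
- by apply/forallP => t; have := gS t; rewrite inE => /andP [].
- apply/forallP => i'; apply/forallP => t; rewrite /pK2 mxE.
  have := gS t; rewrite inE => /andP [_ /andP [/eqP a1 /eqP a2]].
  rewrite [rho _]ffunE; case: (eqVneq i' ord0) => [->|i0] /=; first by rewrite a1.
  by rewrite a2; case: i' i0 => [[|[|//]] ?].
Qed.

Definition cnt m (A : {set cl m}) (i j : 'I_m) (u v : nat) :=
  #|[set x in A | ((x i : nat) == u) && ((x j : nat) == v)]|.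

Definition pat m p (A : {set cl m}) (pr : 'I_m * 'I_m) : nat * nat :=
  if cnt A pr.1 pr.2 0 0 < p then (0, 0)
  else if cnt A pr.1 pr.2 1 0 < p then (1, 0)
  else if cnt A pr.1 pr.2 0 1 < p then (0, 1) else (1, 1).

Lemma pat_lt m p (A : {set cl m}) (pr : 'I_m * 'I_m) :
  ~~ config_in (pK2 p) A -> pr.1 < pr.2 ->
  [/\ (pat p A pr).1 < 2, (pat p A pr).2 < 2 & cnt A pr.1 pr.2 (pat p A pr).1 (pat p A pr).2 < p].
Proof.
move=> nc lt; rewrite /pat.
case: ifP => // h00; case: ifP => // h10; case: ifP => // h01.
split=> //; rewrite ltnNge; apply/negP => h11; move/negP: nc; apply.
apply: (@pK2_config m p A pr.1 pr.2); first by rewrite neq_ltn lt.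
move=> [|[|//]] [|[|//]] _ _; rewrite -/(cnt _ _ _ _ _) leqNgt.
- by rewrite h00.
- by rewrite h01.
- by rewrite h10.
- by rewrite -leqNgt.
Qed.

Lemma upper m p (A : {set cl m}) : ~~ config_in (pK2 p) A ->
  2 * #|A| <= (m + 2) * 2 ^ m + 2 * \sum_(pr : 'I_m * 'I_m | pr.1 < pr.2) (p - 1).
Proof.
move=> nc.
pose hasp (x : cl m) pr := ((x pr.1 : nat) == (pat p A pr).1) && ((x pr.2 : nat) == (pat p A pr).2).
pose Good := [set x in A | [forall pr : 'I_m * 'I_m, (pr.1 < pr.2) ==> ~~ hasp x pr]].
pose Bad := \bigcup_(pr : 'I_m * 'I_m | pr.1 < pr.2) [set x in A | hasp x pr].
have sub : A \subset Good :|: Bad.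
  apply/subsetP => x xA; rewrite in_setU inE xA /=.
  case: (boolP [forall pr : 'I_m * 'I_m, (pr.1 < pr.2) ==> ~~ hasp x pr]) => //= /forallPn [pr].
  rewrite negb_imply negbK => /andP [lt h]; apply/bigcupP; exists pr => //.
  by rewrite inE xA.
have hB : #|Bad| <= \sum_(pr : 'I_m * 'I_m | pr.1 < pr.2) (p - 1).
  apply: leq_trans (card_bigcup_le _ _) _; apply: leq_sum => pr lt.
  have [_ _ h] := pat_lt nc lt; rewrite -ltnS; apply: leq_trans h _; lia.
have hG : 2 * #|Good| <= (m + 2) * 2 ^ m.
  apply: K2free => //; first by move=> x _ t; rewrite leqNgt ltn_ord.
  move=> i j ij; have [u2 v2 _] := pat_lt (pr := (i, j)) nc ij.
  exists (pat p A (i, j)).1, (pat p A (i, j)).2; split=> // x.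
  rewrite inE => /andP [_ /forallP /(_ (i, j))]; rewrite /= ij /= => /negP H [E1 E2].
  by apply: H; rewrite /hasp /= E1 E2 !eqxx.
have := subset_leq_card sub; have := (leq_card_setU Good Bad).1; lia.
Qed.

Definition budget m al c p q (pr : 'I_m * 'I_m) :=
  if des1 al c pr.1 pr.2 == des2 al pr.2 then p - 1 - q else p - 1.

Lemma SsetP m al c (i j : 'I_m) x : x \in Sset al c i j ->
  occ al c x i j /\ forall k l, occ al c x k l -> k = i /\ l = j.
Proof.
rewrite inE => /andP [o /forallP H]; split=> // k l okl.
by move/forallP: (H k) => /(_ l) /implyP /(_ okl) /andP [/eqP -> /eqP ->].
Qed.

Lemma des_lt2 al c k l : des1 al c k l < 2 /\ des2 al l < 2.
Proof. by rewrite /des1 /des2; split; repeat case: ifP. Qed.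

Lemma lower m p q al c : 0 < p -> al <= c -> c <= m -> q <= p - 1 ->
  p - 1 <= 2 ^ (al + (m - c) - 2) ->
  exists Cst : {set cl m}, ~~ config_in (Fabcd (p - q) p p (p - q)) Cst /\
    (m + 2) * 2 ^ m + 2 * \sum_(pr : 'I_m * 'I_m | pr.1 < pr.2) budget al c p q pr <= 2 * #|Cst|.
Proof.
move=> p0 alc cm qp p2.
have E : forall pr : 'I_m * 'I_m, exists Ep : {set cl m},
    pr.1 < pr.2 -> Ep \subset Sset al c pr.1 pr.2 /\ #|Ep| = budget al c p q pr.
  move=> pr; case: (boolP (pr.1 < pr.2)) => lt; last by exists set0.
  have : budget al c p q pr <= #|Sset al c pr.1 pr.2|.
    apply: leq_trans (singles alc lt).
    have : p - 1 <= 2 ^ #|Free al c pr.1 pr.2|.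
      apply: leq_trans p2 _; rewrite leq_pexp2l //; exact: card_Free.
    rewrite /budget; case: ifP => _; lia.
  by case/exists_subset => Ep [h1 h2]; exists Ep.
have [Ef HE] := fin_all_exists E.
pose X := \bigcup_(pr : 'I_m * 'I_m | pr.1 < pr.2) Ef pr.
exists (Main m al c :|: X).
have EfP (pr : 'I_m * 'I_m) x : pr.1 < pr.2 -> x \in Ef pr ->
    occ al c x pr.1 pr.2 /\ forall k l, occ al c x k l -> k = pr.1 /\ l = pr.2.
  by move=> lt /(subsetP (HE pr lt).1) /SsetP.
have XP x : x \in X -> exists2 pr : 'I_m * 'I_m, pr.1 < pr.2 & x \in Ef pr.
  by case/bigcupP => pr lt xE; exists pr.
have MainN x k l : x \in Main m al c -> ~~ occ al c x k l.
  by rewrite MainE => /forallP /(_ k) /forallP /(_ l).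
split.
  apply/negP => /F_count [rho [r01 Hc]].
  set i0 := rho ord0 in r01 Hc; set i1 := rho ord_max in r01 Hc.
  pose i := if i0 < i1 then i0 else i1.
  pose j := if i0 < i1 then i1 else i0.
  have r01' : (i0 : nat) != i1 by [].
  have ij : i < j by rewrite /i /j; case: ifP => h; lia.
  have [u2 v2] := des_lt2 al c i j.
  set u := des1 al c i j in u2; set v := des2 al j in v2.
  have sub : [set x in Main m al c :|: X | ((x i : nat) == u) && ((x j : nat) == v)]
      \subset Ef (i, j).
    apply/subsetP => x; rewrite inE in_setU => /andP [/orP [xM|xX] /andP [/eqP xu /eqP xv]].
      by move: (MainN x i j xM); rewrite /occ ij xu xv !eqxx.
    have [pr lt xE] := XP x xX.
    have [_ H] := EfP pr x lt xE.
    have [h1 h2] := H i j (ltac:(by rewrite /occ ij xu xv !eqxx)).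
    by rewrite h1 h2 -surjective_pairing.
  have cE := subset_leq_card sub; rewrite (HE (i, j) ij).2 in cE.
  have := Hc (if i0 < i1 then u else v) (if i0 < i1 then v else u)
    (ltac:(by case: ifP)) (ltac:(by case: ifP)).
  have -> : [set x in Main m al c :|: X | ((x i0 : nat) == (if i0 < i1 then u else v))
        && ((x i1 : nat) == (if i0 < i1 then v else u))] =
      [set x in Main m al c :|: X | ((x i : nat) == u) && ((x j : nat) == v)].
    apply/setP => x; rewrite !inE /i /j; case: ifP => _ //.
    by rewrite [(_ == v) && _]andbC.
  have -> : ((if i0 < i1 then u else v) == (if i0 < i1 then v else u)) = (u == v).
    by case: ifP => // _; rewrite eq_sym.
  move: cE; rewrite /budget /= -/u -/v; case: ifP => _ h1 h2; have := leq_trans h2 h1; lia.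
have dMX : [disjoint Main m al c & X].
  apply: mydisj => x xM /XP [pr lt xE]; have [o _] := EfP pr x lt xE.
  by move: (MainN x pr.1 pr.2 xM); rewrite o.
have cX : #|X| = \sum_(pr : 'I_m * 'I_m | pr.1 < pr.2) budget al c p q pr.
  rewrite card_bigcup_eq; first by apply: eq_bigr => pr lt; rewrite (HE pr lt).2.
  move=> pr pr' lt lt' ne; apply: mydisj => x x1 x2.
  have [o1 _] := EfP pr x lt x1; have [_ H] := EfP pr' x lt' x2.
  have [h1 h2] := H _ _ o1; move/negP: ne; apply.
  by rewrite [pr]surjective_pairing [pr']surjective_pairing h1 h2.
rewrite card_disjU // cX.
have := Main_lb alc (leqnn m).
have : #|Mk m al c m| <= #|Main m al c|.
  by apply: subset_leq_card; apply/subsetP => x; rewrite MkE => /andP [].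
lia.
Qed.


Lemma inord_eqE n a b : a < n.+1 -> b < n.+1 -> ((inord a : 'I_n.+1) == inord b) = (a == b).
Proof. by move=> ha hb; rewrite -val_eqE /= !inordK. Qed.

Lemma pairs_inj n (i1 j1 i2 j2 : nat) : i1 < j1 -> j1 < n.+1 -> i2 < j2 -> j2 < n.+1 ->
  [set (inord i1 : 'I_n.+1); inord j1] = [set inord i2; inord j2] -> i1 = i2 /\ j1 = j2.
Proof.
move=> ij1 jn1 ij2 jn2 /setP E.
have i1n : i1 < n.+1 by lia.
have i2n : i2 < n.+1 by lia.
have e1 := E (inord i1); have e2 := E (inord j1); have e3 := E (inord i2); have e4 := E (inord j2).
rewrite !inE !inord_eqE // in e1 e2 e3 e4.
move: e1 e2 e3 e4; rewrite !eqxx /= ?orbT.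
repeat case: eqP => //; lia.
Qed.

Lemma card_pairs_lt m n :
  #|[set pr : 'I_m * 'I_m | (pr.1 < pr.2) && (pr.2 < n.+1)]| <= 'C(n.+1, 2).
Proof.
pose f := fun pr : 'I_m * 'I_m => [set (inord pr.1 : 'I_n.+1); inord pr.2].
have inj : {in [set pr : 'I_m * 'I_m | (pr.1 < pr.2) && (pr.2 < n.+1)] &, injective f}.
  move=> [a b] [a' b']; rewrite !inE /= => /andP [h1 h2] /andP [h3 h4] E.
  have [e1 e2] := pairs_inj h1 h2 h3 h4 E.
  by congr pair; apply: val_inj.
rewrite -(card_in_imset inj) -[in 'C(n.+1, 2)](card_ord n.+1) -card_draws.
apply: subset_leq_card; apply/subsetP => B /imsetP [[a b]]; rewrite inE /= => /andP [h1 h2] ->.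
rewrite inE cards2; apply/eqP; congr S; apply/eqnP => /=.
rewrite -val_eqE /= !inordK; lia.
Qed.

Lemma card_pairs_ge m c n : c + n.+1 = m ->
  #|[set pr : 'I_m * 'I_m | (pr.1 < pr.2) && (c <= pr.1)]| <= 'C(n.+1, 2).
Proof.
move=> cm.
pose f := fun pr : 'I_m * 'I_m => [set (inord (pr.1 - c) : 'I_n.+1); inord (pr.2 - c)].
have inj : {in [set pr : 'I_m * 'I_m | (pr.1 < pr.2) && (c <= pr.1)] &, injective f}.
  move=> [a b] [a' b']; rewrite !inE /= => /andP [h1 h2] /andP [h3 h4] E.
  have la := ltn_ord b; have lb := ltn_ord b'.
  have [e1 e2] := @pairs_inj n (a - c) (b - c) (a' - c) (b' - c) (ltac:(lia)) (ltac:(lia)) (ltac:(lia)) (ltac:(lia)) E.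
  by congr pair; apply: val_inj => /=; lia.
rewrite -(card_in_imset inj) -[in 'C(n.+1, 2)](card_ord n.+1) -card_draws.
apply: subset_leq_card; apply/subsetP => B /imsetP [[a b]]; rewrite inE /= => /andP [h1 h2] ->.
have lb := ltn_ord b.
rewrite inE cards2; apply/eqP; congr S; apply/eqnP => /=.
rewrite -val_eqE /= !inordK; lia.
Qed.

Lemma binS2 x : x <= 'C(x + 1, 2).
Proof. by rewrite addn1 binS bin1 leq_addl. Qed.

Unset Implicit Arguments.

Theorem mainTheorem13 (p q m : nat) :
  2 <= p -> q <= p - 1 ->
  2 * Nr (ceil_log2 (p - 1)) + 2 <= m ->
  forb m 3 (pK2 p) <= forb m 3 (Fabcd (p - q) p p (p - q)) + q * Nr (ceil_log2 (p - 1)).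
Proof.
move=> p2 qp hm.
set r := ceil_log2 (p - 1) in hm *.
have hr : uphalf r + r./2 = r.
  by rewrite uphalf_half -addnA addnn; have := odd_double_half r; lia.
have Nrr : r <= Nr r.
  by rewrite /Nr; have := binS2 (uphalf r); have := binS2 r./2; lia.
set al := uphalf r + 1.
set c := m - (r./2 + 1).
have alc : al <= c by rewrite /al /c; lia.
have cm : c <= m by rewrite /c; lia.
have p2r : p - 1 <= 2 ^ (al + (m - c) - 2).
  have -> : al + (m - c) - 2 = r by rewrite /al /c; lia.
  exact: up_logP.
have [Cst [nC hC]] := lower (ltnW p2) alc cm qp p2r.
have fC : #|Cst| <= forb m 3 (Fabcd (p - q) p p (p - q)).
  rewrite /forb; apply: (@leq_bigmax_cond _ _ (fun A : smat m 3 => #|A|) (Cst : smat m 3)).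
  exact: nC.
pose D := [set pr : 'I_m * 'I_m | (pr.1 < pr.2) && (des1 al c pr.1 pr.2 == des2 al pr.2)].
have sumE : \sum_(pr : 'I_m * 'I_m | pr.1 < pr.2) (p - 1) =
    \sum_(pr : 'I_m * 'I_m | pr.1 < pr.2) budget al c p q pr + #|D| * q.
  have -> : #|D| * q = \sum_(pr : 'I_m * 'I_m | pr.1 < pr.2)
      (if des1 al c pr.1 pr.2 == des2 al pr.2 then q else 0).
    rewrite -sum_nat_const -big_mkcondr /=; apply: eq_bigl => pr; by rewrite inE.
  rewrite -big_split /=; apply: eq_bigr => pr _.
  by rewrite /budget; case: ifP => _; lia.
have hD : #|D| <= Nr r.
  have sub : D \subset [set pr : 'I_m * 'I_m | (pr.1 < pr.2) && (pr.2 < (uphalf r).+1)]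
                   :|: [set pr : 'I_m * 'I_m | (pr.1 < pr.2) && (c <= pr.1)].
    apply/subsetP => pr; rewrite !inE => /andP [lt]; rewrite lt /=.
    rewrite /des1 /des2 /al addn1; case: ifP => // _; case: ifP => //.
  apply: leq_trans (subset_leq_card sub) _.
  apply: leq_trans (leq_card_setU _ _).1 _.
  rewrite /Nr !addn1; apply: leq_add; first exact: card_pairs_lt.
  by apply: card_pairs_ge; rewrite /c; lia.
rewrite {1}/forb; apply/bigmax_leqP => A nA.
have hA := upper nA.
have hq : #|D| * q <= q * Nr r by rewrite mulnC leq_mul2l hD orbT.
move: hA hC fC hq sumE; set S1 := \sum_(_ | _) (p - 1); set S2 := \sum_(_ | _) budget _ _ _ _ _.
move=> hA hC fC hq sumE.
have h : 2 * #|A| <= 2 * (forb m 3 (Fabcd (p - q) p p (p - q)) + q * Nr r).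
  apply: leq_trans hA _; rewrite sumE mulnDr mulnDr addnA mulnDr.
  apply: leq_add; first by apply: leq_trans hC _; rewrite leq_mul2l fC.
  by rewrite -mulnDr; exact: leq_mul (leqnn 2) hq.
by rewrite leq_mul2l in h.
Qed.
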